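(* Let $I$ be a countably infinite set, $\lambda,\rho\colon I\to I$ bijections, and $E$ a non-trivial directed $\lambda,\rho$-weakly commutative generalized pseudo effect algebra. If the kite pseudo effect algebra $K^{\lambda,\rho}_I(E)$ satisfies RDP$_1$ and has a least non-trivial normal ideal, then $K^{\lambda,\rho}_I(E)$ is isomorphic to $K^{\mathrm{id},\rho'}_{\mathbb Z}(E)$, where $\rho'(i)=i-1$ for $i\in\mathbb Z$.
   Context: A generalized pseudo effect algebra (GPEA) is a structure $(E;+,0)$ with partial binary $+$ and constant $0$ such that for all $a,b,c$: (GP1) $a+b$ and $(a+b)+c$ exist iff $b+c$ and $a+(b+c)$ exist, and then they are equal; (GP2) if $a+b$ exists there are $d,e$ with $a+b=d+a=b+e$; (GP3) left and right cancellation; (GP4) $a+b=0$ implies $a=b=0$; (GP5) $a+0=0+a=a$. Non-trivial: $E\neq\{0\}$. Order: $a\le b$ iff $a+c=b$ for some $c$; for $a\le b$, $b\ominus_\ell a$ is the unique $d$ with $d+a=b$, $a\ominus_r b$ the unique $e$ with $a+e=b$. Directed: any two elements have a common upper bound. RDP$_1$: whenever $a_1+a_2=b_1+b_2$ there are $c_{11},c_{12},c_{21},c_{22}$ with $a_1=c_{11}+c_{12}$, $a_2=c_{21}+c_{22}$, $b_1=c_{11}+c_{21}$, $b_2=c_{12}+c_{22}$, such that $0\le x\le c_{12}$, $0\le y\le c_{21}$ imply $x+y=y+x$. An ideal is a non-empty subset closed under existing sums and downward closed; normal if $x+N=N+x$ for all $x$ ($x+N=\{x+y\colon y\in N,\ x+y\text{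 defined}\}$, $N+x$ dually); non-trivial if $\neq\{0\}$; least non-trivial if contained in every non-trivial normal ideal. $\lambda,\rho$-weak commutativity: for all families $(f_j)$, $(a_i)$ in $E$ and all $i$: $f_{\rho^{-1}(i)}+a_i$ defined iff $a_i+f_{\lambda^{-1}(i)}$ defined, and $f_{\lambda^{-1}(i)}+a_i$ defined iff $a_i+f_{\rho^{-1}(i)}$ defined. Kite $K^{\lambda,\rho}_I(E)$ (a pseudo effect algebra): universe $E^I\uplus\overline E^I$, $\overline E=\{\bar a\colon a\in E\}$ a disjoint copy; $0=\langle 0\rangle$, $1=\langle\bar 0\rangle$; $\langle\bar a_i\rangle+\langle\bar b_i\rangle$ undefined; $\langle\bar a_i\colon i\in I\rangle+\langle f_j\colon j\in I\rangle=\langle\overline{f_{\rho^{-1}(i)}\ominus_r a_i}\rangle$ when $f_{\rho^{-1}(i)}\le a_i$ for all $i$; $\langle f_j\rangle+\langle\bar a_i\rangle=\langle\overline{a_i\ominus_\ell f_{\lambda^{-1}(i)}}\rangle$ when $f_{\lambda^{-1}(i)}\le a_i$ for all $i$; $\langle f_j\rangle+\langle g_j\rangle=\langle f_j+g_j\rangle$ when all coordinate sums are defined. Isomorphism means isomorphism of pseudo effect algebras. *)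

(* Defs.v *)
From Stdlib Require Import ZArith.
From mathcomp Require Import ssreflect ssrfun ssrbool.

Set Implicit Arguments.
Unset Strict Implicit.

(* A partial binary operation on T is encoded as a ternary relation:
   [psum a b c] means "a + b is defined and equals c". *)
Definition pop (T : Type) := T -> T -> T -> Prop.

Section Partial.
Variables (T : Type) (psum : pop T) (zero : T).

Definition defined (a b : T) : Prop := exists c, psum a b c.

Definition ple (a b : T) : Prop := exists c, psum a c b.

Definition is_GPEA : Prop :=
  (forall a b c c', psum a b c -> psum a b c' -> c = c') /\
  (forall a b c ab s, psum a b ab -> psum ab c s ->
       exists bc, psum b c bc /\ psum a bc s) /\
  (forall a b c bc s, psum b c bc -> psum a bc s ->
       exists ab, psum a b ab /\ psum ab c s) /\
  (forall a b s, psum a b s -> exists d e, psum d a s /\ psum b e s) /\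
  (forall a b c s, psum a b s -> psum a c s -> b = c) /\
  (forall a b c s, psum b a s -> psum c a s -> b = c) /\
  (forall a b, psum a b zero -> a = zero /\ b = zero) /\
  (forall a, psum a zero a /\ psum zero a a).

Definition nontrivial : Prop := exists a, a <> zero.

Definition directed : Prop := forall a b, exists c, ple a c /\ ple b c.

Definition RDP1 : Prop :=
  forall a1 a2 b1 b2 s, psum a1 a2 s -> psum b1 b2 s ->
  exists c11 c12 c21 c22,
    psum c11 c12 a1 /\ psum c21 c22 a2 /\
    psum c11 c21 b1 /\ psum c12 c22 b2 /\
    (forall x y, ple zero x -> ple x c12 -> ple zero y -> ple y c21 ->
       exists z, psum x y z /\ psum y x z).

Definition is_ideal (N : T -> Prop) : Prop :=
  (exists x, N x) /\
  (forall a b c, N a -> N b -> psum a b c -> N c) /\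
  (forall a b, N b -> ple a b -> N a).

Definition is_normal (N : T -> Prop) : Prop :=
  forall x z, (exists y, N y /\ psum x y z) <-> (exists y, N y /\ psum y x z).

Definition nontrivial_set (N : T -> Prop) : Prop := exists x, N x /\ x <> zero.

Definition has_least_nontrivial_normal_ideal : Prop :=
  exists N0, is_ideal N0 /\ is_normal N0 /\ nontrivial_set N0 /\
    forall N, is_ideal N -> is_normal N -> nontrivial_set N ->
      forall x, N0 x -> N x.

End Partial.

(* lambda,rho-weak commutativity; i = rho j = lambda k, i.e. j = rho^{-1} i,
   k = lambda^{-1} i. *)
Definition weakly_commutative (I E : Type) (psum : pop E) (lam rho : I -> I) : Prop :=
  forall (f a : I -> E) (i j k : I), rho j = i -> lam k = i ->
    (defined psum (f j) (a i) <-> defined psum (a i) (f k)) /\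
    (defined psum (f k) (a i) <-> defined psum (a i) (f j)).

(* The kite: inl f = <f_j>, inr a = <bar a_i>. *)
Definition kite (I E : Type) := ((I -> E) + (I -> E))%type.

Definition kite_sum (I E : Type) (psum : pop E) (lam rho : I -> I) : pop (kite I E) :=
  fun x y z =>
  match x, y, z with
  | inl f, inl g, inl h => forall i, psum (f i) (g i) (h i)
  (* <bar a> + <f> = <bar b>, b_i = f_{rho^-1 i} (-)_r a_i, i.e. f_{rho^-1 i} + b_i = a_i *)
  | inr a, inl f, inr b => forall j, psum (f j) (b (rho j)) (a (rho j))
  (* <f> + <bar a> = <bar b>, b_i = a_i (-)_l f_{lam^-1 i}, i.e. b_i + f_{lam^-1 i} = a_i *)
  | inl f, inr a, inr b => forall j, psum (b (lam j)) (f j) (a (lam j))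
  | _, _, _ => False
  end.

Definition kite_zero (I E : Type) (zero : E) : kite I E := inl (fun _ => zero).
Definition kite_one (I E : Type) (zero : E) : kite I E := inr (fun _ => zero).

Definition pea_isomorphic (T1 T2 : Type) (s1 : pop T1) (z1 o1 : T1)
  (s2 : pop T2) (z2 o2 : T2) : Prop :=
  exists phi : T1 -> T2, bijective phi /\ phi z1 = z2 /\ phi o1 = o2 /\
    forall x y z, s1 x y z <-> s2 (phi x) (phi y) (phi z).

Definition countably_infinite (I : Type) : Prop :=
  exists e : nat -> I, bijective e.

(* Main.v *)
Require Import Defs.
From Stdlib Require Import ZArith Lia Classical ClassicalEpsilon FunctionalExtensionality.
From mathcomp Require Import ssreflect ssrfun ssrbool eqtype ssrnat fintype.

Lemma fchoice (A B : Type) (P : A -> B -> Prop) :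
  (forall a, exists b, P a b) -> exists g, forall a, P a (g a).
Proof.
move=> H; exists (fun a => proj1_sig (constructive_indefinite_description _ (H a))).
move=> a; exact: proj2_sig.
Qed.

Definition NS (I E : Type) (zero : E) (S : I -> Prop) : kite I E -> Prop :=
  fun x => match x with inl f => forall i, ~ S i -> f i = zero | inr _ => False end.
Arguments NS {I E}.

Lemma NS_ideal (I E : Type) (psum : pop E) (zero : E) (lam rho linv rinv : I -> I)
  (HG : is_GPEA psum zero) (Hl' : cancel linv lam) (Hr' : cancel rinv rho)
  (S : I -> Prop) (Hinv : forall j j', rho j' = lam j -> (S j <-> S j')) :
  is_ideal (kite_sum psum lam rho) (NS zero S) /\ is_normal (kite_sum psum lam rho) (NS zero S).
Proof.
case: HG => [Hfun [HA1 [HA2 [HG2 [HC1 [HC2 [HG4 HG5]]]]]]].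
have Z0 : forall u v, psum zero u v -> v = u.
  move=> u v H; apply: (Hfun zero u); [exact H | exact (proj2 (HG5 u))].
have Z1 : forall u v, psum u zero v -> v = u.
  move=> u v H; apply: (Hfun u zero); [exact H | exact (proj1 (HG5 u))].
split.
- split; [exists (inl (fun _ => zero)) => /= i _; done|split].
  + case=> [f|f] [g|g] [h|h] //= Nf Ng Hs i Hi.
    have := Hs i; rewrite (Nf i Hi) (Ng i Hi) => H; exact: Z0 H.
  + case=> [g|g] [f|f] //= Nf [[c|c] //=] Hs i Hi.
    have := Hs i; rewrite (Nf i Hi) => H; exact: (proj1 (HG4 _ _ H)).
- move=> x z; split.
  + case=> y [Ny Hs]; case: x Hs => [h|a]; case: y Ny => [f|f] //= Ny;
      case: z => [w|w] //= Hs.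
    * have [g Hg] : exists g, forall i, (~ S i -> g i = zero) /\ psum (g i) (h i) (w i).
        apply (@fchoice _ _ (fun i dd => (~ S i -> dd = zero) /\ psum (dd) (h i) (w i))) => i; case: (classic (S i)) => Hi.
        - have [d [e [H1 H2]]] := HG2 _ _ _ (Hs i); exists d; split => //.
        - have := Hs i; rewrite (Ny i Hi) => /Z1 ->; exists zero; split => //.
          exact: (proj2 (HG5 _)).
      exists (inl g); split => /= i; [move=> Hi|]; apply Hg => //.
    * have [g Hg] : exists g, forall j, (~ S j -> g j = zero) /\
          psum (w (lam j)) (g j) (a (lam j)).
        apply (@fchoice _ _ (fun j dd => (~ S j -> dd = zero) /\
          psum (w (lam j)) (dd) (a (lam j)))) => j; have Ej : rho (rinv (lam j)) = lam j by apply: Hr'.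
        have := Hs (rinv (lam j)); rewrite Ej => H.
        case: (classic (S j)) => Hi.
        - have [d [e [H1 H2]]] := HG2 _ _ _ H; exists e; split => //.
        - have Hi' : ~ S (rinv (lam j)) by move=> /(proj2 (Hinv _ _ Ej)).
          move: H; rewrite (Ny _ Hi') => /Z0 ->; exists zero; split => //.
          exact: (proj1 (HG5 _)).
      exists (inl g); split => /= i; [move=> Hi|]; apply Hg => //.
  + case=> y [Ny Hs]; case: x Hs => [h|a]; case: y Ny => [f|f] //= Ny;
      case: z => [w|w] //= Hs.
    * have [g Hg] : exists g, forall i, (~ S i -> g i = zero) /\ psum (h i) (g i) (w i).
        apply (@fchoice _ _ (fun i dd => (~ S i -> dd = zero) /\ psum (h i) (dd) (w i))) => i; case: (classic (S i)) => Hi.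
        - have [d [e [H1 H2]]] := HG2 _ _ _ (Hs i); exists e; split => //.
        - have := Hs i; rewrite (Ny i Hi) => /Z0 ->; exists zero; split => //.
          exact: (proj1 (HG5 _)).
      exists (inl g); split => /= i; [move=> Hi|]; apply Hg => //.
    * have [g Hg] : exists g, forall j, (~ S j -> g j = zero) /\
          psum (g j) (w (rho j)) (a (rho j)).
        apply (@fchoice _ _ (fun j dd => (~ S j -> dd = zero) /\
          psum (dd) (w (rho j)) (a (rho j)))) => j; have Ej : lam (linv (rho j)) = rho j by apply: Hl'.
        have := Hs (linv (rho j)); rewrite Ej => H.
        case: (classic (S j)) => Hi.
        - have [d [e [H1 H2]]] := HG2 _ _ _ H; exists d; split => //.
        - have Hi' : ~ S (linv (rho j)) by move=> /(proj1 (Hinv _ _ (esym Ej))).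
          move: H; rewrite (Ny _ Hi') => /Z1 ->; exists zero; split => //.
          exact: (proj2 (HG5 _)).
      exists (inl g); split => /= i; [move=> Hi|]; apply Hg => //.
Qed.
Arguments NS_ideal {I E psum zero lam rho linv rinv} HG Hl' Hr' {S}.
Lemma no_split (I E : Type) (psum : pop E) (zero : E) (lam rho linv rinv : I -> I)
  (HG : is_GPEA psum zero) (Hl' : cancel linv lam) (Hr' : cancel rinv rho)
  (Hnt : nontrivial zero)
  (Hleast : has_least_nontrivial_normal_ideal (kite_sum psum lam rho) (kite_zero I zero))
  (S : I -> Prop) (Hinv : forall j j', rho j' = lam j -> (S j <-> S j')) :
  (exists i, S i) -> (exists i, ~ S i) -> False.
Proof.
move=> [i1 Hi1] [i2 Hi2].
have Hinv' : forall j j', rho j' = lam j -> ((~ S j) <-> (~ S j')).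
  by move=> j j' Hj; have := Hinv j j' Hj; tauto.
have [e He] := Hnt.
have nt : forall T : I -> Prop, (exists i, T i) ->
   nontrivial_set (kite_zero I zero) (NS zero T).
  move=> T [i Ti].
  exists (inl (fun j => if excluded_middle_informative (T j) then e else zero)).
  split.
  - move=> j /= Hj; case: excluded_middle_informative => //.
  - move=> [] /(f_equal (fun f => f i)); case: excluded_middle_informative => //.
have [N0 [_ [_ [[x [N0x Hx]] Hl]]]] := Hleast.
have [I1 N1] := NS_ideal HG Hl' Hr' Hinv.
have [I2 N2] := NS_ideal HG Hl' Hr' Hinv'.
have X1 := Hl _ I1 N1 (nt S (ex_intro _ _ Hi1)) x N0x.
have X2 := Hl _ I2 N2 (nt (fun j => ~ S j) (ex_intro _ i2 Hi2)) x N0x.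
case: x Hx X1 X2 {N0x} => [f|f] //= Hx X1 X2; apply: Hx.
rewrite /kite_zero; f_equal; apply: functional_extensionality => i.
case: (classic (S i)) => Hi; [apply: X2 | apply: X1] => //.
Qed.
Arguments no_split {I E psum zero lam rho linv rinv}.
Definition psi (I : Type) (sig sigi : I -> I) (i0 : I) (n : Z) : I :=
  if (0 <=? n)%Z then iter (Z.to_nat n) sigi i0 else iter (Z.to_nat (- n)) sig i0.
Arguments psi {I}.

Lemma psi_rel (I : Type) (lam rho linv rinv : I -> I)
  (Hl' : cancel linv lam) (Hr' : cancel rinv rho) (i0 : I) :
  forall n, rho (psi (fun x => linv (rho x)) (fun x => rinv (lam x)) i0 n) =
            lam (psi (fun x => linv (rho x)) (fun x => rinv (lam x)) i0 (n - 1)).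
Proof.
move=> n; rewrite /psi; case: (Z.le_gt_cases 1 n) => Hn.
- have -> : (0 <=? n)%Z = true by apply/Z.leb_le; lia.
  have -> : (0 <=? n - 1)%Z = true by apply/Z.leb_le; lia.
  have -> : Z.to_nat n = S (Z.to_nat (n - 1)) by lia.
  by rewrite /= Hr'.
- have -> : (0 <=? n - 1)%Z = false by apply/Z.leb_gt; lia.
  have -> : Z.to_nat (- (n - 1)) = S (Z.to_nat (- n)) by lia.
  rewrite /= Hl'.
  case: (Z.eq_dec n 0) => [->|Hn0] //.
  have -> : (0 <=? n)%Z = false by apply/Z.leb_gt; lia.
  done.
Qed.
Arguments psi_rel {I lam rho linv rinv}.
Theorem theorem4p9 (I : Type) (lam rho : I -> I) (E : Type) (psum : pop E) (zero : E) :
  countably_infinite I ->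
  bijective lam -> bijective rho ->
  is_GPEA psum zero -> nontrivial zero -> directed psum ->
  weakly_commutative psum lam rho ->
  RDP1 (kite_sum psum lam rho) (kite_zero I zero) ->
  has_least_nontrivial_normal_ideal (kite_sum psum lam rho) (kite_zero I zero) ->
  pea_isomorphic (kite_sum psum lam rho) (kite_zero I zero) (kite_one I zero)
    (kite_sum psum (fun i : Z => i) (fun i : Z => (i - 1)%Z))
    (kite_zero Z zero) (kite_one Z zero).
Proof.
move=> [e be] [linv Hl Hl'] [rinv Hr Hr'] HG Hnt _ _ _ Hleast.
pose ps := psi (fun x => linv (rho x)) (fun x => rinv (lam x)) (e 0).
have Hrel : forall n, rho (ps n) = lam (ps (n - 1)%Z) := psi_rel Hl' Hr' (e 0).
have linj : injective lam := can_inj Hl.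
have rinj : injective rho := can_inj Hr.
have einj : injective e := bij_inj be.
have Hup : forall a b, ps a = ps b -> ps (a + 1)%Z = ps (b + 1)%Z.
  move=> a b H; apply: rinj; rewrite !Hrel !Z.add_simpl_r; congruence.
have Hdown : forall a b, ps a = ps b -> ps (a - 1)%Z = ps (b - 1)%Z.
  move=> a b H; apply: linj; rewrite -!Hrel; congruence.
have Hsurj : forall i, exists n, ps n = i.
  pose S := fun i => exists n, ps n = i.
  have Hns : ~ exists i, ~ S i.
    move=> Hex; apply: (no_split HG Hl' Hr' Hnt Hleast S) => //;
      last by exists (ps 0%Z); exists 0%Z.
    move=> j j' Hj; split.
    - move=> [n Hn]; exists (n + 1)%Z; apply: rinj; rewrite Hj Hrel Z.add_simpl_r Hn //.
    - move=> [n Hn]; exists (n - 1)%Z; apply: linj; rewrite -Hj -Hrel Hn //.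
  move=> i; apply: NNPP => H; apply: Hns; exists i => //.
have Hper : forall m p, (0 < p)%Z -> ps m = ps (m + p)%Z -> False.
  move=> m p Hp Hm.
  have Q : forall d, ps (m + d)%Z = ps (m + d + p)%Z.
    elim/Z.peano_ind.
    - by rewrite Z.add_0_r.
    - move=> d IH; have := Hup _ _ IH.
      have -> : (m + Z.succ d)%Z = (m + d + 1)%Z by lia.
      have -> : (m + d + 1 + p)%Z = (m + d + p + 1)%Z by lia. done.
    - move=> d IH; have := Hdown _ _ IH.
      have -> : (m + Z.pred d)%Z = (m + d - 1)%Z by lia.
      have -> : (m + d - 1 + p)%Z = (m + d + p - 1)%Z by lia. done.
  have Hall : forall k, ps k = ps (k + p)%Z.
    move=> k; have := Q (k - m)%Z.
    have -> : (m + (k - m))%Z = k by lia. done.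
  have Hmul : forall q r, ps (r + p * q)%Z = ps r.
    elim/Z.peano_ind.
    - by move=> r; rewrite Z.mul_0_r Z.add_0_r.
    - move=> q IH r; rewrite -(IH r) (Hall (r + p * q)%Z); f_equal; lia.
    - move=> q IH r; rewrite -(IH r) (Hall (r + p * Z.pred q)%Z); f_equal; lia.
  have Hfin : forall i, exists r, (0 <= r < p)%Z /\ ps r = i.
    move=> i; case: (Hsurj i) => k <-; exists (k mod p)%Z; split.
    - apply: Z.mod_pos_bound; lia.
    - have Hd := Z.div_mod k p ltac:(lia).
      rewrite -(Hmul (k / p)%Z (k mod p)%Z); f_equal.
      by rewrite Z.add_comm -Hd.
  pose P := Z.to_nat p.
  have hfun : forall x : 'I_(P.+1), {r : 'I_P | ps (Z.of_nat r) = e x}.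
    move=> x; have [r [Hr1 Hr2]] := constructive_indefinite_description _ (Hfin (e x)).
    have Hlt : (Z.to_nat r < P)%N by apply/ltP; rewrite /P; lia.
    exists (Ordinal Hlt) => /=; rewrite Z2Nat.id //; lia.
  pose h := fun x => proj1_sig (hfun x).
  have hinj : injective h.
    move=> x y Hxy; apply: val_inj; apply: einj.
    rewrite -(proj2_sig (hfun x)) -(proj2_sig (hfun y)).
    by rewrite /h in Hxy; rewrite Hxy.
  have := leq_card h hinj; rewrite !card_ord ltnn //.
have psinj : injective ps.
  move=> m n Hmn; case: (Z.lt_total m n) => [H|[H|H]] //.
  - exfalso; apply: (Hper m (n - m)%Z); first lia.
    have -> : (m + (n - m))%Z = n by lia. done.
  - exfalso; apply: (Hper n (m - n)%Z); first lia.
    have -> : (n + (m - n))%Z = m by lia. done.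
pose psinv := fun i => proj1_sig (constructive_indefinite_description _ (Hsurj i)).
have K1 : forall i, ps (psinv i) = i.
  move=> i; exact: (proj2_sig (constructive_indefinite_description _ (Hsurj i))).
have K2 : forall n, psinv (ps n) = n by move=> n; apply: psinj; rewrite K1.
pose phi := fun x : kite I E => match x with
  | inl f => inl (fun n => f (ps n)) | inr a => inr (fun n => a (lam (ps n))) end
  : kite Z E.
pose phii := fun x : kite Z E => match x with
  | inl g => inl (fun i => g (psinv i)) | inr b => inr (fun i => b (psinv (linv i))) end
  : kite I E.
exists phi; split; last split; [|done|split; [done|]].
- exists phii.
  + case=> f /=; f_equal; apply: functional_extensionality => i.
    * by rewrite K1.
    * by rewrite K1 Hl'.
  + case=> f /=; f_equal; apply: functional_extensionality => i.
    * by rewrite K2.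
    * by rewrite Hl K2.
- case=> [f|a] [g|g] [h|h] //=; split => H.
  + by move=> n; apply: H.
  + by move=> i; rewrite -(K1 i); apply: H.
  + by move=> n; apply: H.
  + by move=> j; rewrite -(K1 j); apply: H.
  + by move=> n; have := H (ps n); rewrite Hrel.
  + by move=> j; rewrite -(K1 j) Hrel; apply: H.
Qed.
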